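(* Let $X$ be a real random variable with $X\ge 1.5$ almost surely. Assume $X$ has finite variance and is not almost surely constant. Let $\tau\in(0,1]$ and $c\in\mathbb R$ be constants. Then $$\operatorname{Var}\Big(\sqrt{\big(X+\tfrac{\tau}{1+e^{X}}\big)^2+c^2}\Big)<\operatorname{Var}\Big(\sqrt{X^2+c^2}\Big).$$ *)

(* Defs.v *)
From HB Require Import structures.
From mathcomp Require Import all_boot all_order all_algebra.
From mathcomp Require Import all_classical all_reals all_analysis.

(* Main.v *)
Require Import Defs.
From HB Require Import structures.
From mathcomp Require Import all_boot all_order all_algebra.
From mathcomp Require Import all_classical all_reals all_analysis.
From mathcomp Require Import measurable_realfun.
From mathcomp Require Import ring lra.
Import Order.TTheory GRing.Theory Num.Theory.
Import numFieldNormedType.Exports.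
Local Open Scope ring_scope.
Section real.
Context {R : realType}.

Lemma xdelta_decr (x y : R) : 3/2 <= y -> y < x ->
  x / (1 + expR x) < y / (1 + expR y).
Proof.
move=> hy hyx.
have ey := expR_ge1Dx y.
have ep := expR_gt0 y.
have eD := expR_ge1Dx (x - y).
have exE : expR x = expR y * expR (x - y) by rewrite -expRD addrC subrK.
have epx := expR_gt0 x.
rewrite ltr_pdivrMr ?addr_gt0 // mulrAC ltr_pdivlMr ?addr_gt0 //.
rewrite exE.
set E := expR y in ey ep exE *; set Q := expR (x - y) in eD exE *.
have h1 : y * E * (1 + (x - y)) <= y * E * Q by rewrite ler_pM2l ?mulr_gt0 //; lra.
have h2 : 0 <= (E - (1 + y)) * (y - 1) by apply: mulr_ge0; lra.
have h3 : 0 < (x - y) * (E * (y - 1) - 1) by apply: mulr_gt0; nra.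
nra.
Qed.

Definition dl (tau x : R) := tau / (1 + expR x).
Definition gg (c x : R) := Num.sqrt (x ^+ 2 + c ^+ 2).

Lemma dl_gt0 tau x : 0 < tau -> 0 < dl tau x.
Proof. by move=> t; rewrite /dl divr_gt0 // addr_gt0 // expR_gt0. Qed.

Lemma dl_decr tau x y : 0 < tau -> y < x -> dl tau x < dl tau y.
Proof.
move=> t yx; rewrite /dl ltr_pM2l // ltf_pV2 ?posrE ?addr_gt0 ?expR_gt0 //.
by rewrite ltrD2l ltr_expR.
Qed.

Lemma dl_lip tau x y : 0 < tau <= 1 -> y < x -> dl tau y - dl tau x < x - y.
Proof.
move=> /andP[t0 t1] yx.
have eD := expR_ge1Dx (y - x).
have eyE : expR y = expR x * expR (y - x) by rewrite -expRD addrC subrK.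
have ex := expR_gt0 x; have ey := expR_gt0 y.
have exy : expR y < expR x by rewrite ltr_expR.
have -> : dl tau y - dl tau x = tau * (expR x - expR y) / ((1 + expR x) * (1 + expR y)).
  rewrite /dl; field; apply/andP; split; apply: lt0r_neq0; apply: addr_gt0 => //.
rewrite ltr_pdivrMr ?mulr_gt0 ?addr_gt0 //.
set Ex := expR x in eyE ex exy *; set Ey := expR y in eyE ey exy *; set Q := expR (y - x) in eD eyE.
have h1 : Ex * (1 + (y - x)) <= Ex * Q by rewrite ler_pM2l.
have h2 : tau * (Ex - Ey) <= Ex - Ey by rewrite ler_piMl //; lra.
have h3 : 0 < (x - y) * (1 + Ey + Ex * Ey).
  by apply: mulr_gt0; [lra| rewrite !addr_gt0 ?mulr_gt0].
have h4 : Ex - Ey <= Ex * (x - y) by lra.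
nra.
Qed.


Lemma sqr_gg c x : gg c x ^+ 2 = x ^+ 2 + c ^+ 2.
Proof. by rewrite /gg sqr_sqrtr // addr_ge0 // sqr_ge0. Qed.

Lemma gg_ge0 c x : 0 <= gg c x.
Proof. exact: sqrtr_ge0. Qed.

Lemma gg_lt c x y : 0 <= y -> y < x -> gg c y < gg c x.
Proof.
move=> y0 yx; rewrite /gg ltr_sqrt; last by have := sqr_ge0 c; nra.
by rewrite ltrD2r; nra.
Qed.

Lemma gg_le c x y : 0 <= y -> y <= x -> gg c y <= gg c x.
Proof.
move=> y0; rewrite le_eqVlt => /orP[/eqP->//|yx]; exact/ltW/gg_lt.
Qed.

Lemma key tau c x y : 0 < tau <= 1 -> 3/2 <= y -> y < x ->
  0 < gg c (x + dl tau x) - gg c (y + dl tau y) < gg c x - gg c y.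
Proof.
move=> ht hy yx.
have t0 : 0 < tau by case/andP: ht.
have dx := dl_gt0 _ x t0; have dy := dl_gt0 _ y t0.
have dxy := dl_decr _ _ _ t0 yx.
have lip := dl_lip _ _ _ ht yx.
have xd := xdelta_decr _ _ hy yx.
have xdd : x * dl tau x < y * dl tau y.
  by rewrite /dl !mulrA ![_ * tau]mulrC -!mulrA ltr_pM2l.
set a := x + dl tau x; set b := y + dl tau y.
have ab : b < a by rewrite /a /b; lra.
have sq : a ^+ 2 - b ^+ 2 < x ^+ 2 - y ^+ 2.
  rewrite /a /b; have : dl tau x ^+ 2 < dl tau y ^+ 2 by nra.
  nra.
have b0 : 0 <= b by rewrite /b; lra.
have gab := gg_lt c _ _ b0 ab.
have x0 : 0 <= x by lra.
have y0 : 0 <= y by lra.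
have xa : x <= a by rewrite /a; lra.
have yb : y <= b by rewrite /b; lra.
have gax := gg_le c _ _ x0 xa.
have gby := gg_le c _ _ y0 yb.
have gxy := gg_lt c _ _ y0 yx.
have := sqr_gg c a; have := sqr_gg c b; have := sqr_gg c x; have := sqr_gg c y.
have := gg_ge0 c y; have := gg_ge0 c b.
move: gab gxy gax gby.
set A := gg c a; set B := gg c b; set X' := gg c x; set Y := gg c y.
move=> gab gxy gax gby Bp Yp eY eX eB eA.
apply/andP; split; first by rewrite subr_gt0.
rewrite ltNge; apply/negP => hc.
have : (X' - Y) * (X' + Y) <= (A - B) * (A + B).
  apply: ler_pM; lra.
nra.
Qed.
End real.

Lemma Lfun2_dom (R : realType) d (T : measurableType d) (P : probability T R)
   (f H : T -> R) (k : R) :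
  measurable_fun setT f -> H \in Lfun P 2%:E ->
  (forall x, `|f x| <= `|H x| + k) -> f \in Lfun P 2%:E.
Proof.
move=> mf HL fH.
have Hi := Lfun2_integrable_sqr HL.
rewrite inE; apply/andP; split; first by rewrite inE/=.
rewrite !inE/= /finite_norm unlock poweR_lty//.
have eq x : (`|(EFin \o f) x| `^ 2 = (f x ^+ 2)%:E)%E.
  by rewrite /= powR_mulrn ?real_normK ?num_real.

under eq_integral => x _ do rewrite eq.
apply: integrable_lty => //.
apply: (@le_integrable _ _ _ _ _ measurableT _ (EFin \o (fun x => 2 * H x ^+ 2 + 2 * k ^+ 2))).
- apply/measurable_EFinP; exact: measurable_funX.
- move=> x _ /=; rewrite !lee_fin.
  have := fH x; have := normr_ge0 (f x); have := normr_ge0 (H x).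
  move=> h1 h2 h3.
  rewrite normrX -(real_normK (num_real (H x))) (@ger0_norm _ (2 * `|H x| ^+ 2 + 2 * k ^+ 2)); last first.
    by have := sqr_ge0 `|H x|; have := sqr_ge0 k; nra.
  have k0 : 0 <= `|H x| + k by lra.
  have e1 : `|f x| ^+ 2 <= (`|H x| + k) ^+ 2 by rewrite !expr2; apply: ler_pM.
  have := sqr_ge0 (`|H x| - k).
  rewrite !expr2 in e1 *; nra.
- have -> : EFin \o (fun x => 2 * H x ^+ 2 + 2 * k ^+ 2) =
     ((fun x => 2%:E * (H x ^+ 2)%R%:E) \+ (fun x => 2%:E * (EFin \o cst (k ^+ 2)%R) x))%E.
    by apply/funext => x /=; rewrite EFinD !EFinM.
  apply: integrableD => //; apply: integrableZl => //.
  exact: finite_measure_integrable_cst.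
Qed.

Lemma gg_cont (R : realType) (c : R) : continuous (gg c : R -> R).
Proof.
move=> x; apply: continuous_comp; last exact: sqrt_continuous.
apply: continuousD; first exact: exprn_continuous.
exact: cst_continuous.
Qed.

Lemma dl_cont (R : realType) (tau : R) : continuous (dl tau : R -> R).
Proof.
move=> x; rewrite /dl.
apply: (@continuousM _ _ (cst tau) (fun u => (1 + expR u)^-1)).
  exact: cst_continuous.
apply: continuousV; first by rewrite lt0r_neq0 // addr_gt0 // expR_gt0.
apply: continuousD; first exact: cst_continuous.
exact: continuous_expR.
Qed.

Lemma ff_cont (R : realType) (tau c : R) : continuous ((fun u => gg c (u + dl tau u)) : R -> R).
Proof.
move=> x; apply: continuous_comp; last exact: gg_cont.
apply: continuousD; last exact: dl_cont.
exact: cvg_id.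
Qed.

Lemma sq_cmp (R : realType) (tau c u v : R) : 0 < tau <= 1 -> 3/2 <= u -> 3/2 <= v ->
  (gg c (u + dl tau u) - gg c (v + dl tau v)) ^+ 2 <= (gg c u - gg c v) ^+ 2 /\
  ((gg c (u + dl tau u) - gg c (v + dl tau v)) ^+ 2 = (gg c u - gg c v) ^+ 2 -> u = v).
Proof.
move=> ht hu hv.
suff lt : u != v -> (gg c (u + dl tau u) - gg c (v + dl tau v)) ^+ 2 < (gg c u - gg c v) ^+ 2.
  have [->|uv] := eqVneq u v; first by split => //; rewrite !subrr.
  have h := lt uv; split; first exact: ltW.
  by move=> e; move: h; rewrite e ltxx.
move=> uv.
have hcase : forall a b p q : R, 0 < b - a < q - p -> (a - b) ^+ 2 < (p - q) ^+ 2.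
  move=> a b p q /andP[h1 h2].
  have : 0 < (q - p - (b - a)) * (q - p + (b - a)) by apply: mulr_gt0; lra.
  by rewrite !expr2; nra.
have [ltuv|ltvu|equv] := ltgtP u v.
- exact/hcase/key.
- rewrite -sqrrN opprB -[X in _ < X]sqrrN opprB.
  exact/hcase/key.
- by rewrite equv eqxx in uv.
Qed.

Theorem lemma4 (R : realType) (d : measure_display) (T : measurableType d)
  (P : probability T R) (X : {RV P >-> R}) (tau c : R)
  (HX : {ae P, forall x, 3 / 2 <= X x})
  (Hvar : (X : T -> R) \in Lfun P 2%:E)
  (Hnc : ~ (exists a : R, {ae P, forall x, X x = a}))
  (Htau : 0 < tau <= 1) :
  (variance P (fun x => Num.sqrt ((X x + tau / (1 + expR (X x))) ^+ 2 + c ^+ 2))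
   < variance P (fun x => Num.sqrt (X x ^+ 2 + c ^+ 2)))%E.
Proof.
set F : T -> R := fun x => gg c (X x + dl tau (X x)).
set G : T -> R := fun x => gg c (X x).
change (variance P F < variance P G)%E.
have mX : measurable_fun setT (X : T -> R) by [].
have mF : measurable_fun setT F.
  exact: (measurableT_comp (continuous_measurable_fun (ff_cont _ tau c)) mX).
have mG : measurable_fun setT G.
  exact: (measurableT_comp (continuous_measurable_fun (gg_cont _ c)) mX).
have t0 : 0 < tau by case/andP: Htau.
have dl_le z : dl tau z <= tau.
  rewrite /dl ler_pdivrMr ?addr_gt0 ?expR_gt0 //.
  by have := expR_gt0 z; nra.
have gg_bound z : gg c z <= `|z| + `|c|.
  have h := sqr_gg c z; have := gg_ge0 c z; have := normr_ge0 z; have := normr_ge0 c.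
  rewrite -(real_normK (num_real z)) -(real_normK (num_real c)) in h.
  move=> h1 h2 h3; rewrite leNgt; apply/negP => h4.
  have : (`|z| + `|c|) ^+ 2 < gg c z ^+ 2 by rewrite !expr2; nra.
  by rewrite h !expr2; nra.
have FL : F \in Lfun P 2%:E.
  apply: (@Lfun2_dom _ _ _ P F X (tau + `|c|) mF Hvar) => x.
  rewrite /F ger0_norm ?gg_ge0 //.
  apply: (le_trans (gg_bound _)).
  have := ler_normD (X x) (dl tau (X x)).
  have := dl_le (X x); have := dl_gt0 _ (X x) t0.
  move=> h1 h2; rewrite (ger0_norm (ltW h1)); lra.
have GL : G \in Lfun P 2%:E.
  apply: (@Lfun2_dom _ _ _ P G X `|c| mG Hvar) => x.
  by rewrite /G ger0_norm ?gg_ge0 // gg_bound.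
have Pfin : P setT \is a fin_num := fin_num_measure P _ measurableT.
have F1 := Lfun_subset12 Pfin FL.
have G1 := Lfun_subset12 Pfin GL.
have EGfin : ('E_P[G] \is a fin_num)%E := expectation_fin_num G1.
set m := fine ('E_P[G])%E.
have g0m : gg c (3/2) <= m.
  have : ('E_P[cst (gg c (3/2))] <= 'E_P[G])%E.
    apply: expectation_le => //.
    - by move=> x; exact: gg_ge0.
    - by move=> x; exact: gg_ge0.
    - apply: filterS HX => x hx; rewrite /G; apply: gg_le => //; lra.
  by rewrite expectation_cst -[X in (_ <= X)%E](fineK EGfin) lee_fin.
have hm2 : 9/4 + c ^+ 2 <= m ^+ 2.
  have := sqr_gg c (3/2); have := gg_ge0 c (3/2).
  move=> h1 h2; have : gg c (3/2) ^+ 2 <= m ^+ 2 by rewrite !expr2; apply: ler_pM.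
  by rewrite h2; nra.
have m0 : 0 <= m by apply: le_trans g0m; exact: gg_ge0.
set mu := Num.sqrt (m ^+ 2 - c ^+ 2).
have emu : mu ^+ 2 = m ^+ 2 - c ^+ 2 by rewrite sqr_sqrtr //; lra.
have mu0 : 0 <= mu := sqrtr_ge0 _.
have hmu : 3/2 <= mu by nra.
have ggmu : gg c mu = m by rewrite /gg emu subrK sqrtr_sqr ger0_norm.
set b := gg c (mu + dl tau mu).
have FbL : (F \- cst b)%R \in Lfun P 2%:E.
  by apply: rpredB => //; [exact: lee1n| move=> ?; exact: Lfun_cst].
have GmL : (G \- cst m)%R \in Lfun P 2%:E.
  by apply: rpredB => //; [exact: lee1n| move=> ?; exact: Lfun_cst].
have VG : variance P G = ('E_P[(G \- cst m) ^+ 2])%E.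
  have E0 : ('E_P[G \- cst m] = 0)%E.
    by rewrite expectationB ?Lfun_cst // expectation_cst /m fineK // subee.
  rewrite -(@varianceB_cst_r _ _ _ P G m GL) (varianceE GmL).
  have -> : ('E_P[(G \- cst m)] = 0)%E by exact: E0.
  by rewrite expe2 mule0 sube0.
have VF : (variance P F <= 'E_P[(F \- cst b) ^+ 2])%E.
  rewrite -(@varianceB_cst_r _ _ _ P F b FL) (varianceE FbL).
  rewrite leeBlDr; last by apply: fin_numX; apply: expectation_fin_num; exact: Lfun_subset12.
  exact: leeDl (sqre_ge0 _).
set A := ((F \- cst b) ^+ 2)%R.
set B := ((G \- cst m) ^+ 2)%R.
have AL : A \in Lfun P 1 := Lfun2_mul_Lfun1 FbL FbL.
have BL : B \in Lfun P 1 := Lfun2_mul_Lfun1 GmL GmL.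
have Ax x : A x = (F x - b) ^+ 2 by rewrite /A /= expr2.
have Bx x : B x = (G x - m) ^+ 2 by rewrite /B /= expr2.
have mA : measurable_fun setT A by move: AL; rewrite inE => /andP[]; rewrite inE.
have mB : measurable_fun setT B by move: BL; rewrite inE => /andP[]; rewrite inE.
have AB : {ae P, forall x, A x <= B x /\ (A x = B x -> X x = mu)}.
  apply: filterS HX => x hx.
  rewrite Ax Bx /F /G /b -ggmu.
  exact: sq_cmp.
have EAB : ('E_P[A] <= 'E_P[B])%E.
  apply: expectation_le => //.
  - by move=> x; rewrite Ax sqr_ge0.
  - by move=> x; rewrite Bx sqr_ge0.
  - by apply: filterS AB => x [].
apply: (le_lt_trans VF); rewrite VG lt_neqAle EAB andbT; apply/negP => /eqP eqAB.
have eqAB' : ('E_P[A] = 'E_P[B])%E := eqAB.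
have EBA : ('E_P[B \- A] = 0)%E.
  by rewrite expectationB // eqAB' subee // expectation_fin_num.
have mBA : measurable_fun setT (fun x => (B x - A x)%:E).
  by apply/measurable_EFinP; exact: measurable_funB.
have I0 : (\int[P]_x `|(B x - A x)%:E| = 0)%E.
  rewrite (ae_eq_integral (fun x => (B x - A x)%:E)) //.
  - by move: EBA; rewrite unlock.
  - by apply: measurableT_comp.
  - apply: filterS AB => x [h _] _.
    by rewrite /= ger0_norm // subr_ge0.
have Hae := (ae_eq_integral_abs P measurableT mBA).1 I0.
apply: Hnc; exists mu; apply: filterS2 AB Hae => x [_ h] e; apply: h.
have := e I => /= /eqP; rewrite eqe subr_eq0 => /eqP ->.
by [].
Qed.
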